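(* Every finite dimensional complex Banach space has the $\mathbf{L}_{p,p}$-nu.
   Context: For a Banach space $X$: $\Pi(X)=\{(x,x^* )\in S_X\times S_{X^*}: x^*(x)=1\}$; for $T\in\mathcal{L}(X)$ (bounded linear operators on $X$), $v(T)=\sup\{|x^*(Tx)|:(x,x^* )\in\Pi(X)\}$. $X$ has the $\mathbf{L}_{p,p}$-nu if for every $\varepsilon>0$ and $(x,x^* )\in\Pi(X)$ there is $\eta(\varepsilon,(x,x^* ))>0$ such that whenever $T\in\mathcal{L}(X)$ with $v(T)=1$ satisfies $|x^*(Tx)|>1-\eta(\varepsilon,(x,x^* ))$, there is $S\in\mathcal{L}(X)$ with $v(S)=1$, $|x^*(Sx)|=1$ and $\|S-T\|<\varepsilon$. *)

(* Defs.v *)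
From HB Require Import structures.
From mathcomp Require Import all_boot all_order all_algebra.
From mathcomp Require Import all_classical all_reals all_analysis.
From mathcomp Require Import complex.
Set Implicit Arguments. Unset Strict Implicit. Unset Printing Implicit Defensive.
Import Order.TTheory GRing.Theory Num.Theory ComplexField.
Import numFieldNormedType.Exports.
Local Open Scope classical_set_scope.
Local Open Scope ring_scope.

Section BanachDefs.
Variable R : realType.
Local Notation C := R[i].
Variable X : normedModType C.

(* real-valued norm: the norm of a normedModType over C takes (real, >= 0)
   values in C; we read it in R via the real part *)
Definition rnorm (x : X) : R := complex.Re `|x|.
Definition rabsC (z : C) : R := complex.Re `|z|.

Definition finite_dim : Prop :=
  exists s : seq X, forall x : X,
    exists c : 'I_(size s) -> C, x = \sum_(i < size s) c i *: s`_i.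

Definition is_bounded_op (T : X -> X) : Prop :=
  (forall (a : C) (x y : X), T (a *: x + y) = a *: T x + T y) /\
  exists M : R, forall x, rnorm (T x) <= M * rnorm x.

Definition is_bounded_functional (f : X -> C) : Prop :=
  (forall (a : C) (x y : X), f (a *: x + y) = a * f x + f y) /\
  exists M : R, forall x, rabsC (f x) <= M * rnorm x.

Definition opnorm (T : X -> X) : R :=
  sup [set rnorm (T x) | x in [set x : X | rnorm x <= 1]].
Definition fnorm (f : X -> C) : R :=
  sup [set rabsC (f x) | x in [set x : X | rnorm x <= 1]].

Definition inPi (x : X) (f : X -> C) : Prop :=
  rnorm x = 1 /\ is_bounded_functional f /\ fnorm f = 1 /\ f x = 1.

Definition numrad (T : X -> X) : R :=
  sup [set r : R | exists (x : X) (f : X -> C), inPi x f /\ r = rabsC (f (T x))].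

Definition Lpp_nu : Prop :=
  forall (eps : R), 0 < eps ->
  forall (x : X) (f : X -> C), inPi x f ->
  exists eta : R, 0 < eta /\
    forall T : X -> X, is_bounded_op T -> numrad T = 1 ->
      rabsC (f (T x)) > 1 - eta ->
      exists S : X -> X, [/\ is_bounded_op S, numrad S = 1,
        rabsC (f (S x)) = 1 & opnorm (fun y => S y - T y) < eps].

End BanachDefs.

(* Main.v *)
Require Import Defs.
From HB Require Import structures.
From mathcomp Require Import all_boot all_order all_algebra.
From mathcomp Require Import all_classical all_reals all_analysis.
From mathcomp Require Import complex.
Import numFieldNormedType.Exports.
From mathcomp Require Import ring lra.
Set Implicit Arguments. Unset Strict Implicit. Unset Printing Implicit Defensive.
Import Order.TTheory GRing.Theory Num.Theory ComplexField.
Local Open Scope classical_set_scope.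
Local Open Scope ring_scope.
Local Open Scope complex_scope.
Require Import Defs.
From HB Require Import structures.
From mathcomp Require Import all_boot all_order all_algebra.
From mathcomp Require Import all_classical all_reals all_analysis.
From mathcomp Require Import complex.
Import numFieldNormedType.Exports.
Set Implicit Arguments. Unset Strict Implicit. Unset Printing Implicit Defensive.
Import Order.TTheory GRing.Theory Num.Theory ComplexField.
Local Open Scope classical_set_scope.
Local Open Scope ring_scope.
Local Open Scope complex_scope.

Section Basics.
Variable R : realType.
Variable X : normedModType R[i].

Lemma normX_real (x : X) : `|x| = (rnorm x)%:C.
Proof. by rewrite /rnorm RRe_real // ger0_real. Qed.

Lemma rnorm_ge0 (x : X) : 0 <= rnorm x.
Proof. by have := normr_ge0 x; rewrite normX_real -(rmorph0 (real_complex R)) lecR. Qed.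

Lemma rnormD (x y : X) : rnorm (x + y) <= rnorm x + rnorm y.
Proof. by have := ler_normD x y; rewrite !normX_real -rmorphD lecR. Qed.

Lemma normC_real (z : R[i]) : `|z| = (rabsC z)%:C.
Proof. by rewrite /rabsC RRe_real // ger0_real. Qed.

Lemma rabsC_ge0 (z : R[i]) : 0 <= rabsC z.
Proof. by have := normr_ge0 z; rewrite normC_real -(rmorph0 (real_complex R)) lecR. Qed.

Lemma rnormZ (a : R[i]) (x : X) : rnorm (a *: x) = rabsC a * rnorm x.
Proof. by apply: complexI; rewrite rmorphM -normX_real normrZ normX_real normC_real. Qed.

Lemma rabsCM (a b : R[i]) : rabsC (a * b) = rabsC a * rabsC b.
Proof. by apply: complexI; rewrite rmorphM -!normC_real normrM. Qed.

Lemma rabsCD (a b : R[i]) : rabsC (a + b) <= rabsC a + rabsC b.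
Proof. by have := ler_normD a b; rewrite !normC_real -rmorphD lecR. Qed.

Lemma rabsCN (a : R[i]) : rabsC (- a) = rabsC a.
Proof. by rewrite /rabsC normrN. Qed.

Lemma rnormN (x : X) : rnorm (- x) = rnorm x.
Proof. by rewrite /rnorm normrN. Qed.

Lemma rnorm0 : rnorm (0 : X) = 0.
Proof. by rewrite /rnorm normr0. Qed.

Lemma rnorm_eq0 (x : X) : rnorm x = 0 -> x = 0.
Proof. by move=> h; apply/normr0_eq0; rewrite normX_real h. Qed.

Lemma rabsC_real (a : R) : rabsC a%:C = `|a|.
Proof. by rewrite /rabsC normc_def /= expr0n /= addr0 sqrtr_sqr. Qed.

Lemma rabsC_eq0 (z : R[i]) : rabsC z = 0 -> z = 0.
Proof. by move=> h; apply/normr0_eq0; rewrite normC_real h. Qed.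

Lemma rabsC_ReIm (z : R[i]) : rabsC z <= `|complex.Re z| + `|complex.Im z|.
Proof.
rewrite /rabsC normc_def /=.
rewrite -[X in _ <= X]ger0_norm ?addr_ge0 // -sqrtr_sqr ler_sqrt ?sqr_ge0 //.
rewrite sqrrD -[complex.Re z ^+ 2](real_normK (num_real _)) -[complex.Im z ^+ 2](real_normK (num_real _)).
by rewrite -addrA lerD2l lerDr mulrn_wge0 ?mulr_ge0.
Qed.

End Basics.

Require Import Defs.
From HB Require Import structures.
From mathcomp Require Import all_boot all_order all_algebra.
From mathcomp Require Import all_classical all_reals all_analysis.
From mathcomp Require Import complex.
From mathcomp Require Import lra.
Import numFieldNormedType.Exports.
Set Implicit Arguments. Unset Strict Implicit. Unset Printing Implicit Defensive.
Import Order.TTheory GRing.Theory Num.Theory ComplexField.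
Local Open Scope classical_set_scope.
Local Open Scope ring_scope.
Local Open Scope complex_scope.

Section Generic.
Variables (R : realType) (N : nat).
Local Notation E := 'rV[R]_N.

Lemma lip_cont (g : E -> R) (L : R) : 0 <= L ->
  (forall r s, `|g r - g s| <= L * `|r - s|) -> continuous g.
Proof.
move=> L0 H r; apply/(@cvgrPdist_le _ _ _ _ (nbhs_filter r)) => e e0.
have L1 : 0 < L + 1 by rewrite ltr_wpDl.
have d0 : 0 < e / (L + 1) by rewrite divr_gt0.
apply: filterS (nbhsx_ballx r _ d0) => s; rewrite -ball_normE /= => hs.
apply: (le_trans (H r s)).
apply: (le_trans (ler_wpM2l L0 (ltW hs))).
by rewrite mulrA ler_pdivrMr // [L * e]mulrC ler_pM2l // lerDl.
Qed.

Lemma ball_bounded (M : R) (A : set E) : A `<=` [set v | `|v| <= M] -> bounded_set A.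
Proof.
move=> hA; rewrite /= /bounded_near; near=> M' => t At /=.
apply: le_trans (hA t At) _; near: M'; exact: nbhs_pinfty_ge (num_real _).
Unshelve. all: by end_near. Qed.

Lemma closed_normle (M : R) : closed [set v : E | `|v| <= M].
Proof.
have -> : [set v : E | `|v| <= M] = (fun v : E => `|v|) @^-1` [set y | y <= M] by [].
apply: (continuous_closedP _).1; last exact: closed_le.
move=> v; exact: norm_continuous.
Qed.


Lemma closed_pre (g : E -> R) (D : set R) : continuous g -> closed D -> closed (g @^-1` D).
Proof. by move=> hg hD; apply: (continuous_closedP g).1. Qed.

Lemma dist_cont (r : E) : continuous (fun k : E => `|r - k|).
Proof.
apply: (@lip_cont _ 1) => // a b; rewrite mul1r.
apply: le_trans (ler_dist_dist _ _) _.
by rewrite opprB addrC addrA subrK -normrN opprB.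
Qed.

Lemma kernel_equiv (p : E -> R) (L : R) : 0 <= L ->
  (forall r s, p (r + s) <= p r + p s) ->
  (forall (a : R) r, p (a *: r) = `|a| * p r) ->
  (forall r, p r <= L * `|r|) ->
  exists2 c, 0 < c & forall r, exists2 k, p k = 0 & c * `|r - k| <= p r.
Proof.
move=> L0 pD pZ pL.
have p0 : p 0 = 0 by rewrite -(scale0r (0:E)) pZ normr0 mul0r.
have pN r : p (- r) = p r by rewrite -scaleN1r pZ normrN normr1 mul1r.
have pge0 r : 0 <= p r.
  by have := pD r (- r); rewrite subrr p0 pN => h; lra.
have pB r s : p r - p s <= p (r - s).
  by have := pD (r - s) s; rewrite subrK; lra.
have plip r s : `|p r - p s| <= L * `|r - s|.
  rewrite ler_norml; apply/andP; split.
    by have := pB s r; have := pL (s - r); rewrite -opprB pN normrN; lra.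
  by have := pB r s; have := pL (r - s); lra.
have pc : continuous p := lip_cont L0 plip.
have Kadd k r : p k = 0 -> p (r + k) = p r.
  move=> pk; apply/eqP; rewrite eq_le; apply/andP; split.
    by have := pD r k; lra.
  by have := pB r (- k); rewrite opprK pN; lra.
have Kcl k k' (t : R) : p k = 0 -> p k' = 0 -> p (k + t *: k') = 0.
  move=> pk pk'; apply/eqP; rewrite eq_le pge0 andbT.
  by have := pD k (t *: k'); rewrite pZ pk pk' mulr0 addr0.
have minP r : exists2 k, p k = 0 & forall k', p k' = 0 -> `|r - k| <= `|r - k'|.
  pose A := (p @^-1` [set 0]) `&` [set v : E | `|v| <= 2 * `|r|].
  have A0 : A !=set0.
    by exists 0; split; rewrite /= ?p0 ?normr0 // mulr_ge0.
  have cA : compact A.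
    apply: bounded_closed_compact.
      by apply: (@ball_bounded (2 * `|r|)) => v [].
    apply: closedI; first by apply: closed_pre => //; exact: closed_eq.
    exact: closed_normle.
  have [k kA kmin] := EVT_min_rV A0 cA (continuous_subspaceT (@dist_cont r)).
  move: kA; rewrite inE => -[pk kn].
  exists k => // k' pk'.
  have [h|h] := leP `|k'| (2 * `|r|).
    by apply: kmin; rewrite inE.
  have := kmin 0; rewrite inE subr0 => /(_ (conj p0 _)).
  have n2 : [set v : E | `|v| <= 2 * `|r|] 0 by rewrite /= normr0 mulr_ge0.
  move=> /(_ n2) h0.
  have := lerB_dist k' r; rewrite distrC => h1.
  lra.
pose Z := [set u : E | `|u| = 1 /\ forall k, p k = 0 -> 1 <= `|u - k|].
have key r k : p k = 0 -> (forall k', p k' = 0 -> `|r - k| <= `|r - k'|) ->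
    r - k != 0 -> Z ((`|r - k|)^-1 *: (r - k)).
  move=> pk kmin nz.
  have t0 : 0 < `|r - k| by rewrite normr_gt0.
  split.
    by rewrite normrZ normfV normr_id mulVf // normr_eq0.
  move=> k' pk'.
  have -> : (`|r - k|)^-1 *: (r - k) - k' = (`|r - k|)^-1 *: (r - (k + `|r - k| *: k')).
    by rewrite !scalerBr scalerDr scalerA mulVf ?normr_eq0 // scale1r opprD addrA.
  rewrite normrZ normfV normr_id ler_pdivlMl // mulr1.
  by apply: kmin; apply: Kcl.
case: (pselect (Z !=set0)) => [Z0|Zn].
  have cZ : compact Z.
    apply: bounded_closed_compact.
      by apply: (@ball_bounded 1) => v [h _]; rewrite /= h.
    have -> : Z = [set u : E | `|u| = 1] `&`
        \bigcap_(k in [set k | p k = 0]) [set u : E | 1 <= `|u - k|].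
      by apply/seteqP; split => u [h1 h2]; split => // k /h2.
    apply: closedI.
      have -> : [set u : E | `|u| = 1] = (fun u : E => `|u|) @^-1` [set 1] by [].
      by apply: closed_pre; [move=> v; exact: norm_continuous | exact: closed_eq].
    apply: closed_bigI => k _.
    have -> : [set u : E | 1 <= `|u - k|] = (fun u : E => `|k - u|) @^-1` [set y | 1 <= y].
      by apply/seteqP; split => u /=; rewrite distrC.
    by apply: closed_pre; [exact: dist_cont | exact: closed_ge].
  have [z zZ zmin] := EVT_min_rV Z0 cZ (continuous_subspaceT pc).
  move: zZ; rewrite inE => zZ.
  have m0 : 0 < p z.
    rewrite lt_def pge0 andbT; apply/eqP => pz.
    by have := zZ.2 z pz; rewrite subrr normr0 ler10.
  exists (p z) => // r.
  have [k pk kmin] := minP r.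
  exists k => //.
  have [->|nz] := eqVneq (r - k) 0; first by rewrite normr0 mulr0 pge0.
  have := zmin ((`|r - k|)^-1 *: (r - k)); rewrite inE => /(_ (key r k pk kmin nz)).
  have t0 : 0 < `|r - k| by rewrite normr_gt0.
  rewrite pZ normfV normr_id ler_pdivlMl // => h.
  by rewrite mulrC; apply: le_trans h _; rewrite (Kadd (- k)) ?pN.
exists 1 => // r.
have [k pk kmin] := minP r.
exists k => //.
have [->|nz] := eqVneq (r - k) 0; first by rewrite normr0 mulr0 pge0.
by exfalso; apply: Zn; exists ((`|r - k|)^-1 *: (r - k)); apply: key.
Qed.

Lemma main_generic (p psi : E -> R) (L : R) : 0 <= L ->
  (forall r s, p (r + s) <= p r + p s) ->
  (forall (a : R) r, p (a *: r) = `|a| * p r) ->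
  (forall r, p r <= L * `|r|) ->
  (forall r s, `|psi r - psi s| <= L * `|r - s|) ->
  (forall r, psi r <= p r) ->
  (forall r k, p k = 0 -> psi (r + k) = psi r) ->
  forall eps, 0 < eps -> exists2 eta, 0 < eta &
    forall r, p r = 1 -> 1 - eta < psi r ->
      exists s, [/\ p s = 1, psi s = 1 & `|s - r| < eps].
Proof.
move=> L0 pD pZ pL psiL psip psiK eps eps0.
have [c c0 hc] := kernel_equiv L0 pD pZ pL.
have p0 : p 0 = 0 by rewrite -(scale0r (0:E)) pZ normr0 mul0r.
have pN r : p (- r) = p r by rewrite -scaleN1r pZ normrN normr1 mul1r.
have pge0 r : 0 <= p r.
  by have := pD r (- r); rewrite subrr p0 pN => h; lra.
have pB r s : p r - p s <= p (r - s).
  by have := pD (r - s) s; rewrite subrK; lra.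
have plip r s : `|p r - p s| <= L * `|r - s|.
  rewrite ler_norml; apply/andP; split.
    by have := pB s r; have := pL (s - r); rewrite -opprB pN normrN; lra.
  by have := pB r s; have := pL (r - s); lra.
have pc : continuous p := lip_cont L0 plip.
have psic : continuous psi := lip_cont L0 psiL.
have Kadd k r : p k = 0 -> p (r + k) = p r.
  move=> pk; apply/eqP; rewrite eq_le; apply/andP; split.
    by have := pD r k; lra.
  by have := pB r (- k); rewrite opprK pN; lra.
pose Q := [set r : E | [/\ `|r| <= c^-1, p r = 1 &
   forall s, p s = 1 -> psi s = 1 -> eps <= `|s - r|]].
have cQ : compact Q.
  apply: bounded_closed_compact.
    by apply: (@ball_bounded c^-1) => v [].
  have -> : Q = ([set v : E | `|v| <= c^-1] `&` p @^-1` [set 1]) `&`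
      \bigcap_(s in [set s | p s = 1 /\ psi s = 1]) [set r : E | eps <= `|s - r|].
    apply/seteqP; split => u.
      by case=> h1 h2 h3; split; [split|move=> s [] /h3 h /h].
    by case=> -[h1 h2] h3; split => // s ps qs; exact: h3.
  apply: closedI; first apply: closedI.
  - exact: closed_normle.
  - by apply: closed_pre => //; exact: closed_eq.
  apply: closed_bigI => s _.
  have -> : [set r : E | eps <= `|s - r|] = (fun r : E => `|s - r|) @^-1` [set y | eps <= y] by [].
  by apply: closed_pre; [exact: dist_cont | exact: closed_ge].
have [eta eta0 etaQ] : exists2 eta, 0 < eta & forall r, 1 - eta < psi r -> ~ Q r.
  case: (pselect (Q !=set0)) => [Q0|Qn].
    have [q qQ qmax] := EVT_max_rV Q0 cQ (continuous_subspaceT psic).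
    move: qQ; rewrite inE => -[q1 q2 q3].
    have lt1 : psi q < 1.
      rewrite lt_def -q2 psip andbT; apply/eqP => h.
      by have := q3 q q2 (etrans (esym h) q2); rewrite subrr normr0 leNgt eps0.
    exists (1 - psi q); first by rewrite subr_gt0.
    move=> r; rewrite opprB addrC subrK => h Qr.
    by have := qmax r; rewrite inE => /(_ Qr); rewrite leNgt h.
  by exists 1 => // r _ Qr; apply: Qn; exists r.
exists eta => // r pr hr.
have [k pk hk] := hc r.
have pr' : p (r - k) = 1 by rewrite Kadd ?pN.
have psir' : psi (r - k) = psi r by have := psiK (r - k) k pk; rewrite subrK.
have nr' : `|r - k| <= c^-1.
  by rewrite -(ler_pM2l c0) mulfV ?gt_eqF // -pr.
case: (pselect (exists s, [/\ p s = 1, psi s = 1 & `|s - (r - k)| < eps])).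
  move=> [s [ps qs ds]]; exists (s + k); split.
  - by rewrite Kadd.
  - by rewrite psiK.
  - by move: ds; rewrite opprB addrA.
move=> ns; exfalso; apply: (etaQ (r - k)); first by rewrite psir'.
split => // s ps qs; rewrite leNgt; apply/negP => ds.
by apply: ns; exists s.
Qed.

End Generic.

Require Import Defs.
From HB Require Import structures.
From mathcomp Require Import all_boot all_order all_algebra.
From mathcomp Require Import all_classical all_reals all_analysis.
From mathcomp Require Import complex.
From mathcomp Require Import lra.
Import numFieldNormedType.Exports.
Set Implicit Arguments. Unset Strict Implicit. Unset Printing Implicit Defensive.
Import Order.TTheory GRing.Theory Num.Theory ComplexField.
Local Open Scope classical_set_scope.
Local Open Scope ring_scope.
Local Open Scope complex_scope.

Section BasisSec.
Variable R : realType.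
Variable X : normedModType R[i].

Definition spans n (e : 'I_n -> X) :=
  forall x : X, exists c : 'I_n -> R[i], x = \sum_(i < n) c i *: e i.
Definition indep n (e : 'I_n -> X) :=
  forall c : 'I_n -> R[i], \sum_(i < n) c i *: e i = 0 -> forall i, c i = 0.

Lemma basis_exists : finite_dim X ->
  exists n (e : 'I_n -> X), spans e /\ indep e.
Proof.
move=> [s hs].
suff H : forall m n (e : 'I_n -> X), (n <= m)%N -> spans e ->
    exists n (e : 'I_n -> X), spans e /\ indep e.
  by apply: (H (size s) (size s) (fun i => s`_i)).
elim=> [|m IH] n e hn sp.
  exists n, e; split => // c _ i.
  move: hn; rewrite leqn0 => /eqP n0; exfalso; case: i => i hi; by move: hi; rewrite n0.
case: (pselect (indep e)) => [ind|nind]; first by exists n, e.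
have [c [hc [j cj]]] : exists c : 'I_n -> R[i], \sum_(i < n) c i *: e i = 0 /\ exists j, c j != 0.
  apply: contrapT => hn'; apply: nind => c hc i.
  apply/eqP; apply: contrapT => /negP ci; apply: hn'.
  by exists c; split => //; exists i.
pose e' := fun i : 'I_n.-1 => e (lift j i).
apply: (IH n.-1 e').
  by rewrite -ltnS prednK // (leq_ltn_trans (leq0n j) (ltn_ord j)).
move=> x; have [d ->] := sp x.
exists (fun i => d (lift j i) - d j / c j * c (lift j i)).
rewrite (bigD1_ord j) //=.
have ej : e j = - (c j)^-1 *: \sum_(i < n.-1) c (lift j i) *: e (lift j i).
  move: hc; rewrite (bigD1_ord j) //= => /eqP; rewrite addr_eq0 => /eqP h.
  by rewrite scaleNr -scalerN -h scalerA mulVf // scale1r.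
rewrite ej scalerA scaler_sumr -big_split /=.
apply: eq_bigr => i _.
by rewrite scalerA -scalerDl /e' mulrN addrC mulNr.
Qed.

End BasisSec.

Require Import Defs.
From HB Require Import structures.
From mathcomp Require Import all_boot all_order all_algebra.
From mathcomp Require Import all_classical all_reals all_analysis.
From mathcomp Require Import complex.
From mathcomp Require Import lra.
Import numFieldNormedType.Exports.
Set Implicit Arguments. Unset Strict Implicit. Unset Printing Implicit Defensive.
Import Order.TTheory GRing.Theory Num.Theory ComplexField.
Local Open Scope classical_set_scope.
Local Open Scope ring_scope.
Local Open Scope complex_scope.

Lemma entry_le (R : realType) n (v : 'rV[R]_n) i : `|v ord0 i| <= `|v|.
Proof.
have /mapP[j Hj ->] : `|v ord0 i| \in [seq `|v x.1 x.2| | x : 'I_1 * 'I_n].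
  by apply/mapP; exists (ord0, i) => //=; rewrite mem_enum.
by rewrite [leRHS]/Num.norm /= mx_normrE; apply/bigmax_geP; right => /=; exists j.
Qed.

Section Enc.
Variable R : realType.
Variable I : finType.
Local Notation V := 'rV[R]_#|{: I * bool}|.

Definition ridx (i : I) (b : bool) : 'I_#|{: I * bool}| := enum_rank (i, b).
Definition cz (r : V) (i : I) : R[i] := (r ord0 (ridx i false)) +i* (r ord0 (ridx i true)).
Definition enc (c : I -> R[i]) : V :=
  \row_k (if (enum_val k).2 then complex.Im (c (enum_val k).1) else complex.Re (c (enum_val k).1)).

Lemma cz_enc c i : cz (enc c) i = c i.
Proof. by rewrite /cz /enc /ridx !mxE !enum_rankK /=; case: (c i). Qed.

Lemma czD r s i : cz (r + s) i = cz r i + cz s i.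
Proof. by rewrite /cz !mxE. Qed.

Lemma czZ (a : R) r i : cz (a *: r) i = a%:C * cz r i.
Proof. by rewrite /cz !mxE /=; simpc. Qed.

Lemma cz_bound r i : rabsC (cz r i) <= 2 * `|r|.
Proof.
apply: le_trans (rabsC_ReIm _) _.
by rewrite /cz /= mulr2n mulrDl mul1r lerD ?entry_le.
Qed.

Lemma cz_eq0 r : (forall i, cz r i = 0) -> r = 0.
Proof.
move=> h; apply/rowP => k; rewrite !mxE.
rewrite -(enum_valK k); case: (enum_val k) => i b.
have := h i; rewrite /cz /ridx => -[h1 h2].
by case: b; rewrite ?h1 ?h2.
Qed.

End Enc.

Require Import Defs.
From HB Require Import structures.
From mathcomp Require Import all_boot all_order all_algebra.
From mathcomp Require Import all_classical all_reals all_analysis.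
From mathcomp Require Import complex.
From mathcomp Require Import lra.
Import numFieldNormedType.Exports.
Set Implicit Arguments. Unset Strict Implicit. Unset Printing Implicit Defensive.
Import Order.TTheory GRing.Theory Num.Theory ComplexField.
Local Open Scope classical_set_scope.
Local Open Scope ring_scope.
Local Open Scope complex_scope.

Lemma rnorm_sum (R : realType) (X : normedModType R[i]) m (F : 'I_m -> X) :
  rnorm (\sum_(i < m) F i) <= \sum_(i < m) rnorm (F i).
Proof.
apply: (big_ind2 (fun a b => rnorm a <= b)); first by rewrite rnorm0.
  by move=> a b a' b' h1 h2; apply: le_trans (rnormD _ _) (lerD h1 h2).
by [].
Qed.

Section Coord.
Variable R : realType.
Variable X : normedModType R[i].
Variable n : nat.
Variable e : 'I_n -> X.
Variable espan : spans e.
Variable eind : indep e.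

Definition coord (x : X) : 'I_n -> R[i] := projT1 (cid (espan x)).

Lemma coordE x : x = \sum_(i < n) coord x i *: e i.
Proof. exact: (projT2 (cid (espan x))). Qed.

Lemma coord_uniq x c : x = \sum_(i < n) c i *: e i -> coord x = c.
Proof.
move=> hx; apply/funext => i; apply/eqP; rewrite -subr_eq0; apply/eqP.
move: i; apply: eind.
under eq_bigr do rewrite scalerBl.
by rewrite sumrB -coordE -hx subrr.
Qed.

Lemma coordD (a : R[i]) x y : coord (a *: x + y) = fun i => a * coord x i + coord y i.
Proof.
apply: coord_uniq.
under eq_bigr do rewrite scalerDl -scalerA.
by rewrite big_split /= -scaler_sumr -!coordE.
Qed.

Lemma coord_bound : exists2 C1, 0 < C1 & forall x i, rabsC (coord x i) <= C1 * rnorm x.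
Proof.
pose p (r : 'rV[R]_#|{: 'I_n * bool}|) := rnorm (\sum_(i < n) cz r i *: e i).
pose L := \sum_(i < n) 2 * rnorm (e i).
have L0 : 0 <= L by apply: sumr_ge0 => i _; rewrite mulr_ge0 ?rnorm_ge0.
have pD r s : p (r + s) <= p r + p s.
  rewrite /p; under eq_bigr do rewrite czD scalerDl.
  by rewrite big_split /=; apply: rnormD.
have pZ (a : R) r : p (a *: r) = `|a| * p r.
  rewrite /p; under eq_bigr do rewrite czZ -scalerA.
  by rewrite -scaler_sumr rnormZ rabsC_real.
have pL r : p r <= L * `|r|.
  apply: le_trans (rnorm_sum _) _.
  rewrite /L mulr_suml; apply: ler_sum => i _.
  rewrite rnormZ mulrAC ler_wpM2r ?rnorm_ge0 //.
  exact: cz_bound.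
have [c c0 hc] := kernel_equiv L0 pD pZ pL.
exists (2 / c); first by rewrite divr_gt0.
move=> x i.
pose r := enc (coord x).
have pr : p r = rnorm x.
  by rewrite /p; under eq_bigr do rewrite cz_enc; rewrite -coordE.
have [k pk hk] := hc r.
have k0 : k = 0.
  apply: cz_eq0 => j; move: j; apply: eind.
  by apply: rnorm_eq0.
move: hk; rewrite k0 subr0 pr => hk.
rewrite -(cz_enc (coord x) i) -/r.
apply: le_trans (cz_bound _ _) _.
by rewrite -mulrA ler_pM2l // ler_pdivlMl.
Qed.

End Coord.


Lemma lin_sum (R : realType) (X : normedModType R[i]) (T : X -> X) :
  (forall (a : R[i]) (x y : X), T (a *: x + y) = a *: T x + T y) ->
  forall m (c : 'I_m -> R[i]) (v : 'I_m -> X),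
  T (\sum_(j < m) c j *: v j) = \sum_(j < m) c j *: T (v j).
Proof.
move=> hT m c v.
have T0 : T 0 = 0.
  have := hT 1 0 0; rewrite scaler0 addr0 scale1r => /(congr1 (fun z => z - T 0)).
  by rewrite subrr addrK => h; apply/esym.
apply: (big_ind2 (fun a b => T a = b)) => //.
  by move=> a b a' b' <- <-; rewrite -{1}[a]scale1r hT scale1r.
by move=> j _; rewrite -[_ *: v j]addr0 hT T0 addr0.
Qed.

Section Ops.
Variable R : realType.
Variable X : normedModType R[i].
Variable n : nat.
Variable e : 'I_n -> X.
Variable espan : spans e.
Variable eind : indep e.
Variable C1 : R.
Variable C10 : 0 < C1.
Variable hC1 : forall x i, rabsC (coord espan x i) <= C1 * rnorm x.

Local Notation I2 := ('I_n * 'I_n)%type.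
Local Notation V := 'rV[R]_#|{: I2 * bool}|.

Definition col (r : V) (j : 'I_n) : X := \sum_(i < n) cz r (i, j) *: e i.
Definition Phi (r : V) (y : X) : X := \sum_(j < n) coord espan y j *: col r j.

Lemma colD r s j : col (r + s) j = col r j + col s j.
Proof. by rewrite /col -big_split /=; apply: eq_bigr => i _; rewrite czD scalerDl. Qed.

Lemma colZ (a : R) r j : col (a *: r) j = a%:C *: col r j.
Proof. by rewrite /col scaler_sumr; apply: eq_bigr => i _; rewrite czZ scalerA. Qed.

Lemma PhiD r s y : Phi (r + s) y = Phi r y + Phi s y.
Proof. by rewrite /Phi -big_split /=; apply: eq_bigr => j _; rewrite colD scalerDr. Qed.

Lemma PhiZ (a : R) r y : Phi (a *: r) y = a%:C *: Phi r y.
Proof.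
rewrite /Phi scaler_sumr; apply: eq_bigr => j _.
by rewrite colZ !scalerA mulrC.
Qed.

Lemma PhiN r y : Phi (- r) y = - Phi r y.
Proof. by rewrite -scaleN1r PhiZ rmorphN1 scaleN1r. Qed.

Lemma PhiB r s y : Phi (r - s) y = Phi r y - Phi s y.
Proof. by rewrite PhiD PhiN. Qed.

Lemma Phi_lin r (a : R[i]) x y : Phi r (a *: x + y) = a *: Phi r x + Phi r y.
Proof.
rewrite /Phi (coordD espan eind) scaler_sumr -big_split /=; apply: eq_bigr => j _.
by rewrite scalerDl scalerA.
Qed.

Definition Bcol := \sum_(i < n) 2 * rnorm (e i).
Definition Kop := C1 * Bcol * n%:R.

Lemma Bcol_ge0 : 0 <= Bcol.
Proof. by apply: sumr_ge0 => i _; rewrite mulr_ge0 ?rnorm_ge0. Qed.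

Lemma Kop_ge0 : 0 <= Kop.
Proof. by rewrite /Kop !mulr_ge0 ?Bcol_ge0 // ltW. Qed.

Lemma col_bound r j : rnorm (col r j) <= Bcol * `|r|.
Proof.
apply: le_trans (rnorm_sum _) _.
rewrite /Bcol mulr_suml; apply: ler_sum => i _.
rewrite rnormZ mulrAC ler_wpM2r ?rnorm_ge0 //.
exact: cz_bound.
Qed.

Lemma Phi_bound r y : rnorm (Phi r y) <= Kop * `|r| * rnorm y.
Proof.
apply: le_trans (rnorm_sum _) _.
apply: (le_trans (_ : _ <= \sum_(j < n) (C1 * rnorm y) * (Bcol * `|r|))).
  apply: ler_sum => j _; rewrite rnormZ.
  apply: ler_pM; rewrite ?rabsC_ge0 ?rnorm_ge0 //.
    exact: col_bound.
rewrite sumr_const card_ord -mulr_natr /Kop.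
suff -> : C1 * rnorm y * (Bcol * `|r|) * n%:R = C1 * Bcol * n%:R * `|r| * rnorm y by [].
ring.
Qed.

Lemma Phi_bounded r : is_bounded_op (Phi r).
Proof.
split; first exact: Phi_lin.
by exists (Kop * `|r|) => y; apply: Phi_bound.
Qed.

Lemma opnorm_Phi r s : opnorm (fun y => Phi s y - Phi r y) <= Kop * `|s - r|.
Proof.
apply: ge_sup; first by exists (rnorm (Phi s 0 - Phi r 0)), 0 => //=; rewrite rnorm0 ler01.
move=> _ [y hy <-]; rewrite -PhiB.
apply: le_trans (Phi_bound _ _) _.
rewrite -[X in _ <= X]mulr1 ler_wpM2l //.
by rewrite mulr_ge0 ?Kop_ge0.
Qed.

Lemma Phi_repr (T : X -> X) : is_bounded_op T ->
  T = Phi (enc (fun ij : I2 => coord espan (T (e ij.2)) ij.1)).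
Proof.
move=> [Tlin _]; apply/funext => y.
rewrite /Phi {1}(coordE espan y) lin_sum //.
apply: eq_bigr => j _; congr (_ *: _).
rewrite /col; under eq_bigr do rewrite cz_enc /=.
by rewrite -coordE.
Qed.

End Ops.


Section NumradSec.
Variable R : realType.
Variable X : normedModType R[i].

Lemma func0 (g : X -> R[i]) : is_bounded_functional g -> g 0 = 0.
Proof.
move=> [glin _].
have := glin 1 0 0; rewrite scaler0 addr0 mul1r => /(congr1 (fun z => z - g 0)).
by rewrite subrr addrK => h; apply/esym.
Qed.

Lemma funcD (g : X -> R[i]) u v : is_bounded_functional g -> g (u + v) = g u + g v.
Proof. by move=> [glin _]; rewrite -{1}[u]scale1r glin mul1r. Qed.

Lemma funcZ (g : X -> R[i]) a u : is_bounded_functional g -> g (a *: u) = a * g u.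
Proof. by move=> hg; rewrite -[a *: u]addr0 (proj1 hg) (func0 hg) addr0. Qed.

Lemma func_bound (g : X -> R[i]) : is_bounded_functional g ->
  forall z, rabsC (g z) <= fnorm g * rnorm z.
Proof.
move=> hg z; have [_ [M hM]] := hg.
have [->|z0] := eqVneq z 0.
  by rewrite func0 // rnorm0 mulr0 /rabsC normr0.
have t0 : 0 < rnorm z.
  by rewrite lt_def rnorm_ge0 andbT; apply/eqP => /rnorm_eq0; apply/eqP.
have ti0 : 0 <= (rnorm z)^-1 by rewrite invr_ge0 ltW.
pose w := ((rnorm z)^-1)%:C *: z.
have nw : rnorm w = 1 by rewrite rnormZ rabsC_real ger0_norm // mulVf ?gt_eqF.
have ub : rabsC (g w) <= fnorm g.
  apply: ub_le_sup; last by exists w => //=; rewrite nw.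
  exists `|M| => _ [x hx <-].
  apply: le_trans (hM x) _.
  apply: (le_trans (_ : _ <= `|M| * rnorm x)); first by rewrite ler_wpM2r ?rnorm_ge0 ?ler_norm.
  by rewrite -[X in _ <= X]mulr1 ler_wpM2l.
move: ub; rewrite funcZ // rabsCM rabsC_real ger0_norm // => ub.
by rewrite mulrC -ler_pdivrMl.
Qed.

Lemma inPi_bound (y : X) g : inPi y g -> forall z, rabsC (g z) <= rnorm z.
Proof.
move=> [_ [hg [fg _]]] z.
by have := func_bound hg z; rewrite fg mul1r.
Qed.

Lemma numrad_ub (A : X -> X) M : (forall y, rnorm (A y) <= M * rnorm y) ->
  forall y g, inPi y g -> rabsC (g (A y)) <= numrad A.
Proof.
move=> hA y g hP.
apply: ub_le_sup; last by exists y, g.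
exists M => _ [y' [g' [hP' ->]]].
apply: le_trans (inPi_bound hP' _) _.
by have := hA y'; rewrite (proj1 hP') mulr1.
Qed.

Lemma numrad_le (A : X -> X) b : (exists (y : X) (g : X -> R[i]), inPi y g) ->
  (forall y g, inPi y g -> rabsC (g (A y)) <= b) -> numrad A <= b.
Proof.
move=> [y [g hP]] hb; apply: ge_sup; first by exists (rabsC (g (A y))), y, g.
by move=> _ [y' [g' [hP' ->]]]; apply: hb.
Qed.

End NumradSec.


Lemma rabsC_dist (R : realType) (a b : R[i]) : `|rabsC a - rabsC b| <= rabsC (a - b).
Proof.
rewrite ler_norml; apply/andP; split.
  have := rabsCD (b - a) a; rewrite subrK -opprB rabsCN; lra.
have := rabsCD (a - b) b; rewrite subrK; lra.
Qed.

Lemma funcB (R : realType) (X : normedModType R[i]) (g : X -> R[i]) u v :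
  is_bounded_functional g -> g (u - v) = g u - g v.
Proof. by move=> hg; rewrite funcD // -scaleN1r funcZ // mulN1r. Qed.

Lemma main_normed (R : realType) (X : normedModType R[i]) :
  finite_dim X -> Lpp_nu X.
Proof.
move=> fd.
have [n [e [esp eind]]] := basis_exists fd.
have [C1 C10 hC1] := coord_bound esp eind.
move=> eps eps0 x0 f0 hP.
have hg0 := proj1 (proj2 hP).
have nx0 := proj1 hP.
have hPi : exists (y : X) (g : X -> R[i]), inPi y g by exists x0, f0.
pose K := Kop e C1.
have K0 : 0 <= K := Kop_ge0 e C10.
pose p r := numrad (Phi esp r).
pose psi r := rabsC (f0 (Phi esp r x0)).
have hA r y : rnorm (Phi esp r y) <= (K * `|r|) * rnorm y := Phi_bound hC1 r y.
have pge0 r : 0 <= p r.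
  exact: le_trans (rabsC_ge0 _) (numrad_ub (hA r) hP).
have pD r s : p (r + s) <= p r + p s.
  apply: (numrad_le hPi) => y g hyg.
  rewrite PhiD funcD; last exact: (proj1 (proj2 hyg)).
  apply: le_trans (rabsCD _ _) _.
  by apply: lerD; apply: (numrad_ub (hA _)).
have pZle (a : R) r : p (a *: r) <= `|a| * p r.
  apply: (numrad_le hPi) => y g hyg.
  rewrite PhiZ funcZ; last exact: (proj1 (proj2 hyg)).
  rewrite rabsCM rabsC_real ler_wpM2l //.
  exact: (numrad_ub (hA _)).
have pZ (a : R) r : p (a *: r) = `|a| * p r.
  apply/eqP; rewrite eq_le pZle /=.
  have [->|a0] := eqVneq a 0; first by rewrite normr0 mul0r pge0.
  have := pZle a^-1 (a *: r); rewrite scalerA mulVf // scale1r => h.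
  have na : 0 < `|a| by rewrite normr_gt0.
  rewrite -ler_pdivlMl //; apply: le_trans h _.
  by rewrite normfV.
have pL r : p r <= K * `|r|.
  apply: (numrad_le hPi) => y g hyg.
  apply: le_trans (inPi_bound hyg _) _.
  by have := hA r y; rewrite (proj1 hyg) mulr1.
have psiL r s : `|psi r - psi s| <= K * `|r - s|.
  apply: le_trans (rabsC_dist _ _) _.
  rewrite -funcB // -PhiB.
  apply: le_trans (inPi_bound hP _) _.
  by have := hA (r - s) x0; rewrite nx0 mulr1.
have psip r : psi r <= p r := numrad_ub (hA r) hP.
have psiK r k : p k = 0 -> psi (r + k) = psi r.
  move=> pk; rewrite /psi PhiD funcD //.
  have : rabsC (f0 (Phi esp k x0)) = 0.
    by apply/eqP; rewrite eq_le rabsC_ge0 andbT -pk psip.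
  by move/rabsC_eq0 => ->; rewrite addr0.
have eps1 : 0 < eps / (K + 1) by rewrite divr_gt0 // ltr_wpDl.
have [eta eta0 H] := main_generic K0 pD pZ pL psiL psip psiK eps1.
exists eta; split => // T hT nT fT.
have eT := Phi_repr esp hT.
move: eT; set r := enc _ => eT; clearbody r; subst T.
have [s [ps qs ds]] := H r nT fT.
exists (Phi esp s); split => //.
  exact: (Phi_bounded eind hC1 s).
apply: le_lt_trans (opnorm_Phi C10 hC1 r s) _.
apply: le_lt_trans (ler_wpM2l K0 (ltW ds)) _.
rewrite mulrA ltr_pdivrMr ?ltr_wpDl // mulrC ltr_pM2l // ltrDl //.
Qed.


Unset Implicit Arguments.
Theorem corollary3p4 (R : realType) (X : completeNormedModType R[i]) :
  finite_dim X -> Lpp_nu X.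
Proof. exact: main_normed. Qed.

Print Assumptions corollary3p4.
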